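(* Let $m\ge1$ and $A\ge1$ be integers, and let $\alpha\neq\beta$ be elements of $\mathbb{Z}[\zeta_m]$ whose representations are bounded in $[-A,A]$. Then $$|\alpha-\beta|\ge\frac{1}{(2A\,\phi(m)+1)^{\phi(m)-1}}.$$
   Context: $\zeta_m$ is a primitive $m$-th root of unity and $\phi$ is Euler's totient function. The representation of $\alpha\in\mathbb{Z}[\zeta_m]$ is the unique tuple of integers $(a_0,\dots,a_{\phi(m)-1})$ with $\alpha=\sum_{i=0}^{\phi(m)-1}a_i\zeta_m^i$; it is bounded in $[-A,A]$ if $-A\le a_i\le A$ for all $i$. *)

(* Defs.v *)
From mathcomp Require Import all_boot all_order all_algebra all_field.
Set Implicit Arguments. Unset Strict Implicit. Unset Printing Implicit Defensive.
Import Order.TTheory GRing.Theory Num.Theory.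
Local Open Scope ring_scope.

Definition repr_val (m : nat) (zeta : algC) (a : 'I_(totient m) -> int) : algC :=
  \sum_(i < totient m) (a i)%:~R * zeta ^+ i.

Definition repr_bounded (m : nat) (A : int) (a : 'I_(totient m) -> int) : Prop :=
  forall i, -A <= a i <= A.

(* Main.v *)
Require Import Defs.
From mathcomp Require Import all_boot all_order all_algebra all_field.
From mathcomp Require Import zify.
Import Order.TTheory GRing.Theory Num.Theory.
Local Open Scope ring_scope.

Lemma norm_unity (x : algC) (m : nat) : (0 < m)%N -> x ^+ m = 1 -> `|x| = 1.
Proof.
move=> m0 xm; apply/eqP; rewrite -(pexpr_eq1 m0) ?normr_ge0 //.
by rewrite -normrX xm normr1.
Qed.

Lemma eval_div (p q d r : {poly int}) (x : algC) : p = q * d + r ->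
  (map_poly (intr : int -> algC) d).[x] = 0 ->
  (map_poly (intr : int -> algC) p).[x] = (map_poly (intr : int -> algC) r).[x].
Proof.
move=> -> rx.
by rewrite rmorphD rmorphM /= hornerD hornerM rx mulr0 add0r.
Qed.

Theorem mainTheorem8 (m : nat) (A : int) (zeta : algC)
  (a b : 'I_(totient m) -> int) :
  (1 <= m)%N -> 1 <= A -> m.-primitive_root zeta ->
  repr_bounded A a -> repr_bounded A b ->
  repr_val zeta a != repr_val zeta b ->
  1 / ((2 * A * (totient m)%:Z + 1)%:~R ^+ (totient m).-1)
    <= `|repr_val zeta a - repr_val zeta b|.
Proof.
move=> m1 A1 prim ha hb neq.
set n := totient m.
pose c i := a i - b i.
pose P : {poly int} := \sum_(i < n) (c i)%:P * 'X^i.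
pose Pc := map_poly (intr : int -> algC) P.
have PcE x : Pc.[x] = \sum_(i < n) (c i)%:~R * x ^+ i.
  rewrite /Pc /P rmorph_sum horner_sum; apply: eq_bigr => i _.
  by rewrite rmorphM /= map_polyC map_polyXn hornerCM hornerXn.
have gamE : repr_val zeta a - repr_val zeta b = Pc.[zeta].
  rewrite PcE /repr_val -sumrB; apply: eq_bigr => i _.
  by rewrite /c intrB mulrBl.
pose s := [seq zeta ^+ k | k <- [seq k <- iota 0 m | coprime k m]].
have cycE : cyclotomic zeta m = \prod_(w <- s) ('X - w%:P).
  rewrite /cyclotomic big_map big_filter.
  by rewrite (_ : iota 0 m = index_iota 0 m) ?big_mkord // /index_iota subn0.
have sz_s : size s = n.
  by have := size_cyclotomic zeta m; rewrite cycE size_prod_XsubC => -[].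
have uniq_s : uniq s.
  rewrite map_inj_in_uniq ?filter_uniq ?iota_uniq // => i j.
  rewrite !mem_filter !mem_iota /= => /andP[_ ltim] /andP[_ ltjm] /eqP.
  by rewrite (eq_prim_root_expr prim) !modn_small // => /eqP.
have m0 : (0 < m)%N by [].
have Hs w : w \in s -> w ^+ m = 1 /\ exists2 k, coprime k m & w = zeta ^+ k.
  case/mapP=> k; rewrite mem_filter => /andP[ck _] ->; split; last by exists k.
  by rewrite exprAC (prim_expr_order prim) expr1n.
pose Phi := 'Phi_m.
have PhiC : map_poly (intr : int -> algC) Phi = cyclotomic zeta m.
  exact: Cintr_Cyclotomic.
have rootPhi w : w \in s -> (map_poly (intr : int -> algC) Phi).[w] = 0.
  by move=> ws; apply/eqP; rewrite PhiC cycE -/(root _ w) root_prod_XsubC.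
have Pnz w : w \in s -> Pc.[w] != 0.
  case/Hs=> _ [k ck ->]; have [u Du] := Qn_aut_exists ck.
  have uP : map_poly u Pc = Pc.
    by rewrite /Pc -map_poly_comp; apply: eq_map_poly => z /=; rewrite rmorph_int.
  rewrite -(Du zeta (prim_expr_order prim)) -uP horner_map fmorph_eq0.
  by rewrite -gamE subr_eq0.
pose R (j : nat) := Pdiv.Ring.rmodp (P * 'X^j) Phi.
have szR j : (size (R j) <= n)%N.
  have := Pdiv.Ring.ltn_rmodp (P * 'X^j) Phi.
  rewrite /Phi size_Cyclotomic monic_neq0 ?Cyclotomic_monic //.
have keyR j x : (map_poly (intr : int -> algC) Phi).[x] = 0 ->
   \sum_(i < n) ((R j)`_i)%:~R * x ^+ i = Pc.[x] * x ^+ j.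
  move=> rx.
  have E := Pdiv.RingMonic.rdivp_eq (Cyclotomic_monic m) (P * 'X^j).
  have := @eval_div _ _ _ _ x E rx.
  rewrite rmorphM /= map_polyXn hornerM hornerXn => ->.
  rewrite (@horner_coef_wide _ n); last exact: (leq_trans (size_poly _ _) (szR j)).
  by apply: eq_bigr => i _; rewrite coef_map.
pose w (k : 'I_n) := s`_k.
have ws k : w k \in s by rewrite mem_nth // sz_s.
pose M : 'M[int]_n := \matrix_(j, i) (R j)`_i.
pose W : 'M[algC]_n := \matrix_(i, k) w k ^+ i.
pose D : 'rV[algC]_n := \row_k Pc.[w k].
have MW : map_mx intr M *m W = W *m diag_mx D.
  apply/matrixP => j k; rewrite mul_mx_diag !mxE mulrC -keyR ?rootPhi //.
  by apply: eq_bigr => i _; rewrite !mxE.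
have detW : \det W != 0.
  have -> : W = Vandermonde n (\row_k w k) by apply/matrixP => i j; rewrite !mxE.
  rewrite det_Vandermonde; apply/prodf_neq0 => i _; apply/prodf_neq0 => j lt.
  rewrite !mxE subr_eq0 /w nth_uniq ?sz_s //.
  by apply/eqP => /val_inj eij; rewrite eij ltnn in lt.
have Ndet : (\det M)%:~R = \prod_k Pc.[w k].
  have := congr1 determinant MW.
  rewrite det_mulmx det_map_mx det_mulmx det_diag [RHS]mulrC => /(mulIf detW) ->.
  by apply: eq_bigr => k _; rewrite mxE.
have Nnz : \prod_k Pc.[w k] != 0 by apply/prodf_neq0 => k _; apply: Pnz.
have N1 : 1 <= `|\prod_k Pc.[w k]|.
  by rewrite -Ndet norm_intr_ge1 ?intr_int // Ndet.
have zs : zeta \in s by rewrite -root_prod_XsubC -cycE (root_cyclotomic prim).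
have ix : (index zeta s < n)%N by rewrite -sz_s index_mem.
pose k0 : 'I_n := Ordinal ix.
have wk0 : w k0 = zeta by exact: nth_index.
have bnd x : x \in s -> `|Pc.[x]| <= (2 * A * n%:Z)%:~R.
  case/Hs=> xm _; have nx := @norm_unity x m m0 xm.
  rewrite PcE; apply: le_trans (ler_norm_sum _ _ _) _.
  apply: (@le_trans _ _ (\sum_(i < n) ((2 * A)%:~R : algC))).
    apply: ler_sum => i _; rewrite normrM normrX nx expr1n mulr1 -intr_norm ler_int.
    have := ha i; have := hb i; rewrite /c; move=> /andP[? ?] /andP[? ?].
    rewrite (le_trans (ler_normB _ _)) // mulr2n mulrDl mul1r.
    by apply: lerD; rewrite ler_norml; apply/andP; split.
  rewrite sumr_const card_ord.
  by rewrite [X in _ <= X]intrM -pmulrn mulr_natr.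
have Bpos : (0 : algC) < (2 * A * n%:Z + 1)%:~R.
  by rewrite ltr0z; lia.
rewrite gamE ler_pdivrMr ?exprn_gt0 //.
apply: le_trans N1 _.
rewrite (bigD1 k0) //= wk0 normrM ler_wpM2l ?normr_ge0 // normr_prod.
apply: (@le_trans _ _ (\prod_(k < n | k != k0) ((2 * A * n%:Z + 1)%:~R : algC))).
  apply: ler_prod => k _; rewrite normr_ge0 /=.
  by apply: le_trans (bnd _ (ws k)) _; rewrite ler_int lerDl.
by rewrite prodr_const cardC1 card_ord.
Qed.
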